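(* There do not exist a finite set $H$ and functions $f:H\times\Sigma\to H$ and $o:H\times\Sigma\to\{1,-1\}$ such that every word of $\mathcal{L}$ is of the form $\mathrm{out}(x,\sigma)$ for some $x\in H$ and some $\sigma\in\Sigma^*$. Here, for $x\in H$ and $\sigma=s_1\cdots s_m\in\Sigma^*$, we set $h_0=x$, $h_i=f(h_{i-1},s_i)$, and $\mathrm{out}(x,\sigma)=t_1\cdots t_m\in\tilde\Sigma^*$, where $t_i=s_i$ if $o(h_{i-1},s_i)=1$ and $t_i=\tilde s_i$ if $o(h_{i-1},s_i)=-1$. (That is, a deterministic hidden-variable model with finitely many hidden states cannot account for all possible outcome sequences of the experiment.)
   Context: Let $\Sigma=\{A,B,C,a,b,c,\alpha,\beta,\gamma\}$ be nine observables arranged in a $3\times 3$ square with rows $(A,B,C)$, $(a,b,c)$, $(\alpha,\beta,\gamma)$. The six \emph{contexts} are the three rows $\{A,B,C\},\{a,b,c\},\{\alpha,\beta,\gamma\}$ and the three columns $\{A,a,\alpha\},\{B,b,\beta\},\{C,c,\gamma\}$. Each context has a sign: $-1$ for $\{C,c,\gamma\}$ and $+1$ for the other five. Two distinct observables are \emph{compatible} if they lie in a common context, and \emph{incompatible} otherwise. Let $\tilde\Sigma=\{X,\tilde X: X\in\Sigma\}$ (18 letters); the letter $X$ means ''observable $X$ measured with value $1$'' and $\tilde X$ means ''$X$ measured with value $-1$''. For a word $w=t_1\cdots t_m\in\tilde\Sigma^*$ define inductively partial assignments $v_0,\dots,v_m:\Sigma\rightharpoonup\{1,-1\}$ (an observable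 in $\mathrm{dom}(v_i)$ is \emph{determined} after step $i$, with value $v_i(X)$), and whether $w$ is consistent: $v_0$ is the empty assignment. Given $v_{i-1}$, let $t_i$ record observable $X$ with value $\varepsilon$. If $X\in\mathrm{dom}(v_{i-1})$ and $v_{i-1}(X)\ne\varepsilon$, then $w$ is \emph{inconsistent}. Otherwise let $u$ be the restriction of $v_{i-1}$ to observables that are equal to or compatible with $X$, extended by $u(X)=\varepsilon$; then $v_i$ is obtained from $u$ by repeatedly doing the following until nothing changes: whenever a context has exactly two of its observables in the domain, assign the third observable the value making the product of the three values equal to the sign of that context. The word $w$ is \emph{consistent} if no step is inconsistent; $\mathcal{L}$ is the set of consistent words (it contains the empty word). *)

(* Defs.v *)
From HB Require Import structures.
From mathcomp Require Import all_boot.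
Set Implicit Arguments. Unset Strict Implicit. Unset Printing Implicit Defensive.

(* The nine observables of the Peres-Mermin square:
   rows (A,B,C), (a,b,c), (alpha,beta,gamma). *)
Inductive obs := oA | oB | oC | oa | ob | oc | oal | obe | oga.

Definition obs_code (x : obs) : 'I_9 :=
  match x with
  | oA => inord 0 | oB => inord 1 | oC => inord 2
  | oa => inord 3 | ob => inord 4 | oc => inord 5
  | oal => inord 6 | obe => inord 7 | oga => inord 8 end.
Definition obs_decode (i : 'I_9) : obs :=
  match val i with
  | 0 => oA | 1 => oB | 2 => oC | 3 => oa | 4 => ob | 5 => oc
  | 6 => oal | 7 => obe | _ => oga end.
Lemma obs_codeK : cancel obs_code obs_decode.
Proof. by case; rewrite /obs_decode /= inordK. Qed.
HB.instance Definition _ := Equality.copy obs (can_type obs_codeK).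
HB.instance Definition _ := Choice.copy obs (can_type obs_codeK).
HB.instance Definition _ := Countable.copy obs (can_type obs_codeK).
HB.instance Definition _ := Finite.copy obs (can_type obs_codeK).

(* Values: [true] encodes +1, [false] encodes -1.  The product of values
   in {1,-1} corresponds to [~~ xor], i.e. product = 1 iff an even number
   of the values are -1. *)
Definition val_mul (e1 e2 : bool) : bool := e1 == e2.

(* The six contexts, each with its sign (true = +1, false = -1). *)
Definition contexts : seq (obs * obs * obs * bool) :=
  [:: (oA, oB, oC, true); (oa, ob, oc, true); (oal, obe, oga, true);
      (oA, oa, oal, true); (oB, ob, obe, true); (oC, oc, oga, false)].

Definition in_context (X : obs) (c : obs * obs * obs * bool) : bool :=
  let: (x, y, z, _) := c in (X == x) || (X == y) || (X == z).

Definition compatible (X Y : obs) : bool :=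
  (X != Y) && has (fun c => in_context X c && in_context Y c) contexts.

(* Letters of tilde-Sigma: (X, true) is "X", (X, false) is "tilde X". *)
Definition letter := (obs * bool)%type.

Definition assignment := obs -> option bool.

Definition empty_assignment : assignment := fun _ => None.

Definition upd (v : assignment) (X : obs) (e : bool) : assignment :=
  fun Y => if Y == X then Some e else v Y.

Definition close_context (v : assignment) (c : obs * obs * obs * bool)
  : assignment :=
  let: (x, y, z, s) := c in
  match v x, v y, v z with
  | Some ex, Some ey, None => upd v z (val_mul (val_mul ex ey) s)
  | Some ex, None, Some ez => upd v y (val_mul (val_mul ex ez) s)
  | None, Some ey, Some ez => upd v x (val_mul (val_mul ey ez) s)
  | _, _, _ => v
  end.

Definition close_pass (v : assignment) : assignment :=
  foldl close_context v contexts.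

(* Each pass that changes something enlarges the domain, which has at
   most 9 elements, so 9 passes reach the fixed point. *)
Definition closure (v : assignment) : assignment := iter 9 close_pass v.

Definition step (v : assignment) (X : obs) (e : bool) : assignment :=
  closure (upd (fun Y => if (Y == X) || compatible X Y then v Y else None) X e).

(* Running a word from an assignment; None = inconsistent. *)
Fixpoint run (v : assignment) (w : seq letter) : option assignment :=
  match w with
  | [::] => Some v
  | (X, e) :: w' =>
      match v X with
      | Some e' => if e' != e then None else run (step v X e) w'
      | None => run (step v X e) w'
      end
  end.

Definition consistent (w : seq letter) : Prop := run empty_assignment w <> None.

Fixpoint out (H : Type) (f : H -> obs -> H) (o : H -> obs -> bool)
  (x : H) (sigma : seq obs) : seq letter :=
  match sigma with
  | [::] => [::]
  | s :: sigma' => (s, o x s) :: out f o (f x s) sigma'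
  end.

(* Main.v *)
Require Import Defs.
From mathcomp Require Import all_boot.
From Stdlib Require Import FunctionalExtensionality.

Definition obs_eqb (x y : obs) : bool :=
  match x, y with
  | oA, oA | oB, oB | oC, oC | oa, oa | ob, ob | oc, oc
  | oal, oal | obe, obe | oga, oga => true | _, _ => false end.
Lemma obs_eqE x y : (x == y) = obs_eqb x y.
Proof. by case: x; case: y; first [rewrite eqxx | apply/eqP]. Qed.
Definition upd' (v : assignment) (X : obs) (e : bool) : assignment :=
  fun Y => if obs_eqb Y X then Some e else v Y.
Lemma upd_eq : upd = upd'.
Proof.
apply: functional_extensionality => v; apply: functional_extensionality => X.
apply: functional_extensionality => e; apply: functional_extensionality => Y.
by rewrite /upd /upd' obs_eqE.
Qed.

Definition gA (B C a al : option bool) (e : bool) : assignment :=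
  Defs.closure (upd (fun Y => match Y with oB => B | oC => C | oa => a | oal => al
                          | _ => None end) oA e).
Definition gb (a c B be : option bool) (e : bool) : assignment :=
  Defs.closure (upd (fun Y => match Y with oa => a | oc => c | oB => B | obe => be
                          | _ => None end) ob e).

Lemma stepA v e : step v oA e = gA (v oB) (v oC) (v oa) (v oal) e.
Proof.
rewrite /step /gA; congr Defs.closure; apply: functional_extensionality => x; destruct x; rewrite /upd /compatible /in_context /= ?obs_eqE; reflexivity.
Qed.
Lemma stepb v e : step v ob e = gb (v oa) (v oc) (v oB) (v obe) e.
Proof.
rewrite /step /gb; congr Defs.closure; apply: functional_extensionality => x; destruct x; rewrite /upd /compatible /in_context /= ?obs_eqE; reflexivity.
Qed.

Lemma gA_b B C a al e : gA B C a al e ob = None.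
Proof. by case: B => [[]|]; case: C => [[]|]; case: a => [[]|]; case: al => [[]|]; case: e;
  rewrite /gb /gA /Defs.closure /close_pass /close_context upd_eq; vm_compute. Qed.
Lemma gb_A a c B be e : gb a c B be e oA = None.
Proof. by case: B => [[]|]; case: c => [[]|]; case: a => [[]|]; case: be => [[]|]; case: e;
  rewrite /gb /gA /Defs.closure /close_pass /close_context upd_eq; vm_compute. Qed.

Fixpoint altw (b : bool) (t : seq bool) : seq letter :=
  match t with
  | [::] => [::]
  | e :: t' => ((if b then oA else ob), e) :: altw (~~ b) t'
  end.
Fixpoint alts (b : bool) (m : nat) : seq obs :=
  match m with 0 => [::] | m'.+1 => (if b then oA else ob) :: alts (~~ b) m' end.

Lemma altw_cons t : forall v b, v (if b then oA else ob) = None -> run v (altw b t) <> None.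
Proof.
elim: t => [|e t IH] v b Hv //=.
rewrite Hv; apply: IH; case: b Hv => /= _.
  by rewrite stepA gA_b.
by rewrite stepb gb_A.
Qed.

Lemma snd_altw t b : map snd (altw b t) = t.
Proof. by elim: t b => [|e t IH] b //=; rewrite IH. Qed.
Lemma fst_altw t b : map fst (altw b t) = alts b (size t).
Proof. by elim: t b => [|e t IH] b //=; rewrite IH. Qed.
Lemma fst_out (H : Type) (f : H -> obs -> H) o sigma : forall x, map fst (out f o x sigma) = sigma.
Proof. by elim: sigma => [|s sg IH] x //=; rewrite IH. Qed.

Theorem mainTheorem5 :
  ~ exists (H : finType) (f : H -> obs -> H) (o : H -> obs -> bool),
      forall w : seq letter, consistent w ->
        exists (x : H) (sigma : seq obs), out f o x sigma = w.
Proof.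
move=> [H [f [o Hw]]].
set m := #|H|.
have ex t : size t = m -> exists x : H, out f o x (alts true m) = altw true t.
  move=> St; have [x [sg E]] := Hw (altw true t) (altw_cons t empty_assignment true erefl).
  exists x; have := @fst_out _ f o sg x; rewrite E fst_altw St => ->; exact: E.
have [x0 _] := ex (nseq m true) (size_nseq _ _).
pose G (t : m.-tuple bool) := odflt x0 [pick x | out f o x (alts true m) == altw true t].
have GP t : out f o (G t) (alts true m) = altw true t.
  rewrite /G; case: pickP => [x /eqP //|N].
  have [x Ex] := ex t (size_tuple t); by move: (N x); rewrite Ex eqxx.
have injG : injective G.
  move=> t1 t2 E; apply: val_inj => /=.
  by rewrite -(snd_altw t1 true) -(snd_altw t2 true) -!GP E.
have := leq_card G injG; rewrite card_tuple card_bool /m.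
by move: #|H| => n; rewrite leqNgt ltn_expl.
Qed.
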